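(* Let $S=(w_1,\ldots,w_{3m})$ be a list of $3m$ positive integers and let $b$ be an integer. If there is a partition of $\{1,\ldots,3m\}$ into $m$ sets $S_1,\ldots,S_m$ with $\sum_{i\in S_j}w_i=b$ for each $j$, then the graph $G(S,b)$ has a path decomposition of width at most $4$ and length at most $l=1-2m+2\sum_{i=1}^{3m}w_i$.
   Context: A path decomposition of a graph $G$ is a sequence $(X_1,\ldots,X_l)$ of subsets of $V(G)$ covering $V(G)$, such that every edge lies in some $X_i$, and $X_i\cap X_k\subseteq X_j$ whenever $i\leq j\leq k$; width is $\max_i|X_i|-1$, length is $l$. Construction of $G(S,b)$: for each $i\in\{1,\ldots,3m\}$ build $H_i$ from $w_i$ disjoint copies $K_3^{i,1},\ldots,K_3^{i,w_i}$ of $K_3$ and $w_i-1$ disjoint copies $K_4^{i,1},\ldots,K_4^{i,w_i-1}$ of $K_4$ by identifying, for each $q=1,\ldots,w_i-1$, two distinct vertices of $K_4^{i,q}$ with a vertex of $K_3^{i,q}$ and with a vertex of $K_3^{i,q+1}$ respectively, done so that each vertex of each $K_3^{i,q}$ is identified with at most one vertex from other cliques (a chain alternating triangles and $K_4$'s). Build $H_{m,b}$ from $m+1$ disjoint copies $K_5^1,\ldots,K_5^{m+1}$ of $K_5$ and $m$ disjoint copies $P_b^1,\ldots,P_b^m$ of the path with $b$ edges, by identifying, for each $j=1,\ldots,m$, one endpoint of $P_b^j$ with a vertex of $K_5^j$ and the other endpoint with a vertex of $K_5^{j+1}$, such that no vertex of any $K_5^j$ is identified with endpoints of two different paths. $G(S,b)$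 is the disjoint union of $H_1,\ldots,H_{3m}$ and $H_{m,b}$. *)

(* Defs.v *)
From HB Require Import structures.
From mathcomp Require Import all_boot all_order all_algebra.
Set Implicit Arguments. Unset Strict Implicit. Unset Printing Implicit Defensive.

(* Path decompositions of a graph given by a vertex predicate V and a  *)
(* (symmetric) edge relation E on an eqType T.  Bags are sequences;    *)
Section PathDec.
Variable T : eqType.

Definition is_path_decomposition (V : T -> Prop) (E : T -> T -> Prop)
    (Xs : seq (seq T)) : Prop :=
  (forall X x, X \in Xs -> x \in X -> V x) /\
  (forall x, V x -> exists2 X, X \in Xs & x \in X) /\
  (forall x y, E x y -> exists2 X, X \in Xs & (x \in X) && (y \in X)) /\
  (forall i j k x, i <= j -> j <= k -> k < size Xs ->
     x \in nth [::] Xs i -> x \in nth [::] Xs k -> x \in nth [::] Xs j).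

(* width <= w  iff  max_i |X_i| - 1 <= w, i.e. every bag has <= w+1 vertices *)
Definition pd_width_le (Xs : seq (seq T)) (w : nat) : Prop :=
  forall X, X \in Xs -> size (undup X) <= w.+1.

Definition pd_length (Xs : seq (seq T)) : nat := size Xs.
End PathDec.

Inductive vert : Type :=
  | Tri of nat & nat & nat  (* Tri i q k : vertex k (<3) of triangle K_3^{i,q} *)
  | K4x of nat & nat & nat  (* K4x i q k : the two (k<2) non-identified vertices
                               of K_4^{i,q} *)
  | Cl5 of nat & nat        (* Cl5 j k  : vertex k (<5) of K_5^j *)
  | Pth of nat & nat.       (* Pth j p  : internal vertex p (0<p<b) of P_b^j *)

Lemma vert_dec : comparable vert.
Proof. move=> x y; rewrite /decidable; decide equality; exact: (fun a b => decP (@eqP _ a b)). Qed.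
HB.instance Definition _ := comparableMixin vert_dec.

(* the p-th vertex (0 <= p <= b) of the path P_b^j; its endpoints are
   identified with vertex 1 of K_5^j and vertex 0 of K_5^{j+1}, so no
   vertex of a K_5 is identified with endpoints of two different paths *)
Definition path_vertex (b j p : nat) : vert :=
  if p == 0 then Cl5 j 1 else if p == b then Cl5 j.+1 0 else Pth j p.

(* All indices are 0-based: H_i for i < 3m, triangles q < w_i, K_4's
   q < w_i - 1 (K_4^{i,q} glues vertex 1 of triangle q to vertex 0 of
   triangle q+1), K_5's j <= m, paths j < m.  w_i = nth 0 S i.
   G(S,b) is the union of the following cliques. *)
Definition GSb_clique (S : seq nat) (m b : nat) (C : seq vert) : Prop :=
  (exists i q, [/\ i < 3 * m, q < nth 0 S i &
                 C = [:: Tri i q 0; Tri i q 1; Tri i q 2]]) \/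
  (exists i q, [/\ i < 3 * m, q.+1 < nth 0 S i &
                 C = [:: Tri i q 1; Tri i q.+1 0; K4x i q 0; K4x i q 1]]) \/
  (exists j, j <= m /\ C = [:: Cl5 j 0; Cl5 j 1; Cl5 j 2; Cl5 j 3; Cl5 j 4]) \/
  (exists j p, [/\ j < m, p < b &
                 C = [:: path_vertex b j p; path_vertex b j p.+1]]).

Definition GSb_vertex (S : seq nat) (m b : nat) (v : vert) : Prop :=
  exists2 C, GSb_clique S m b C & v \in C.

Definition GSb_edge (S : seq nat) (m b : nat) (u v : vert) : Prop :=
  u != v /\ exists2 C, GSb_clique S m b C & (u \in C) && (v \in C).

(* Main.v *)
Require Import Defs.
From HB Require Import structures.
From mathcomp Require Import all_boot all_order all_algebra.
From mathcomp Require Import zify.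
Set Implicit Arguments. Unset Strict Implicit. Unset Printing Implicit Defensive.

Inductive key := KK of nat | KT of nat & nat | KQ of nat & nat.
Lemma key_dec : comparable key.
Proof. move=> x y; rewrite /decidable; decide equality; exact: (fun a b => decP (@eqP _ a b)). Qed.
HB.instance Definition _ := comparableMixin key_dec.

Lemma memI (x : vert) (s : seq vert) : x \in s <-> List.In x s.
Proof.
elim: s => [|a s IH] //=; rewrite in_cons; split.
- by case/orP=> [/eqP->|/IH]; [left|right].
- by case=> [->|/IH->]; rewrite ?eqxx ?orbT.
Qed.

Definition lexle (a b : nat * nat) := (a.1 < b.1) || ((a.1 == b.1) && (a.2 <= b.2)).

Lemma pv_inv B j p x : path_vertex B j p = x ->
  (p = 0 /\ x = Cl5 j 1) \/ (p <> 0 /\ p = B /\ x = Cl5 j.+1 0) \/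
  (p <> 0 /\ p <> B /\ x = Pth j p).
Proof.
rewrite /path_vertex => <-.
case: eqP => [E|Hp0]; first by left.
case: eqP => [E|HpB]; first by right; left.
by right; right.
Qed.

Section Construction.
Variables (m B n : nat) (w f : nat -> nat).
Hypothesis Hw : forall i, i < n -> 0 < w i.
Hypothesis Hf : forall i, i < n -> f i < m.
Hypothesis Hs : forall j, j < m -> \sum_(0 <= i < n | f i == j) w i = B.

Definition g j x := \sum_(0 <= y < x | f y == j) w y.
Definition off i := g (f i) i.

Lemma gS j x : g j x.+1 = g j x + (if f x == j then w x else 0).
Proof. by rewrite /g big_mkcond big_nat_recr //= -big_mkcond. Qed.

Lemma g_mono j x y : x <= y -> g j x <= g j y.
Proof. by move=> Hxy; rewrite /g (big_cat_nat (leq0n x) Hxy) leq_addr. Qed.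

Lemma off_le i : i < n -> off i + w i <= B.
Proof.
move=> Hi; rewrite -(Hs (Hf Hi)) -/(g (f i) n).
have := g_mono (f i) Hi; rewrite gS eqxx; done.
Qed.

Lemma off_mono i i' : i < i' -> f i = f i' -> off i + w i <= off i'.
Proof.
move=> Hii' Hf'; rewrite /off -Hf'.
have := g_mono (f i) Hii'; rewrite gS eqxx; done.
Qed.

Lemma ivt j p x : p < g j x -> exists i, i < x /\ g j i <= p < g j i.+1.
Proof.
elim: x => [|x IH]; first by rewrite /g big_geq.
case: (ltnP p (g j x)) => [/IH [i [Hi H]]|Hle Hlt]; first by exists i; split=> //; lia.
by exists x; split=> //; rewrite Hle.
Qed.

Lemma exists_tri j p : j < m -> p < B ->
  exists i q, [/\ i < n, f i = j, q < w i & off i + q = p].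
Proof.
move=> Hj Hp; rewrite -(Hs Hj) -/(g j n) in Hp.
have [i [Hi /andP [H1 H2]]] := ivt Hp.
move: H2; rewrite gS; case: eqP => [Hfi|_]; last by lia.
have Ho : off i = g j i by rewrite /off Hfi.
exists i, (p - g j i); split=> //; rewrite ?Ho; lia.
Qed.

Definition validk k : bool :=
  match k with
  | KK j => j <= m
  | KT i q => (i < n) && (q < w i)
  | KQ i q => (i < n) && (q.+1 < w i)
  end.

Definition bag k : seq vert :=
  match k with
  | KK j => [:: Cl5 j 0; Cl5 j 1; Cl5 j 2; Cl5 j 3; Cl5 j 4]
  | KT i q => [:: Tri i q 0; Tri i q 1; Tri i q 2;
                  path_vertex B (f i) (off i + q); path_vertex B (f i) (off i + q).+1]
  | KQ i q => [:: Tri i q 1; Tri i q.+1 0; K4x i q 0; K4x i q 1;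
                  path_vertex B (f i) (off i + q).+1]
  end.

Definition tm k : nat * nat :=
  match k with
  | KK j => (j, 0)
  | KT i q => (f i, 2 * (off i + q) + 1)
  | KQ i q => (f i, 2 * (off i + q) + 2)
  end.

Lemma valid_KT i q : validk (KT i q) -> [/\ i < n, q < w i, f i < m & off i + q < B].
Proof. move=> /andP [Hi Hq]; have := off_le Hi; have := Hf Hi; split=> //; lia. Qed.

Lemma valid_KQ i q : validk (KQ i q) -> [/\ i < n, q.+1 < w i, f i < m & off i + q.+1 < B].
Proof. move=> /andP [Hi Hq]; have := off_le Hi; have := Hf Hi; split=> //; lia. Qed.

Lemma off_eq i i' q q' : q < w i -> q' < w i' -> f i = f i' ->
  off i + q = off i' + q' -> i = i' /\ q = q'.
Proof.
move=> Hq Hq' Hfi E; case: (ltngtP i i') => H.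
- have := off_mono H Hfi; lia.
- have := off_mono H (esym Hfi); lia.
- subst; split=> //; lia.
Qed.

Lemma tm_inj a b : validk a -> validk b -> tm a = tm b -> a = b.
Proof.
case: a => [j|i q|i q]; case: b => [j'|i' q'|i' q'] //= Va Vb [] E1; try lia.
- by rewrite E1.
- move=> E2; case/andP: Va => _ Va; case/andP: Vb => _ Vb.
  have E3 : off i + q = off i' + q' by lia.
  by have [-> ->] := off_eq Va Vb E1 E3.
- move=> E2; case/andP: Va => _ Va; case/andP: Vb => _ Vb.
  have E3 : off i + q = off i' + q' by lia.
  by have [-> ->] := off_eq (ltnW Va) (ltnW Vb) E1 E3.
Qed.

Definition convex_at (x : vert) := forall a b c, validk a -> validk b -> validk c ->
  lexle (tm a) (tm b) -> lexle (tm b) (tm c) -> x \in bag a -> x \in bag c -> x \in bag b.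

Lemma conv_iff x lo hi :
  (forall k, validk k -> (x \in bag k <-> lexle lo (tm k) && lexle (tm k) hi)) -> convex_at x.
Proof.
move=> H a b c Va Vb Vc Hab Hbc /(H _ Va) Ha /(H _ Vc) Hc; apply/(H _ Vb); clear H.
move: Hab Hbc Ha Hc; case: (tm a) => [a1 a2]; case: (tm b) => [b1 b2];
  case: (tm c) => [c1 c2]; case: lo => [l1 l2]; case: hi => [h1 h2]; rewrite /lexle /=; lia.
Qed.

Lemma conv_single x t : (forall k, validk k -> x \in bag k -> k = t) -> convex_at x.
Proof.
move=> H a b c Va Vb Vc Hab Hbc Ha Hc.
have Ea := H _ Va Ha; have Ec := H _ Vc Hc; subst.
suff -> : b = t by [].
apply: tm_inj => //; move: Hab Hbc; case: (tm t) => [a1 a2]; case: (tm b) => [b1 b2].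
rewrite /lexle /= => H1 H2; have E1 : b1 = a1 by lia.
have E2 : b2 = a2 by lia. by rewrite E1 E2.
Qed.

Lemma conv_two x t1 t2 : validk t1 -> validk t2 -> x \in bag t1 -> x \in bag t2 ->
  (tm t2).1 = (tm t1).1 -> (tm t2).2 = (tm t1).2 + 1 ->
  (forall k, validk k -> x \in bag k -> k = t1 \/ k = t2) -> convex_at x.
Proof.
move=> V1 V2 M1 M2 E1 E2 H a b c Va Vb Vc Hab Hbc Ha Hc.
suff : tm b = tm t1 \/ tm b = tm t2.
  by case=> E; [have -> := tm_inj Vb V1 E | have -> := tm_inj Vb V2 E].
case: (H _ Va Ha) => Ea; case: (H _ Vc Hc) => Ec; subst a c;
move: Hab Hbc E1 E2; case: (tm t1) => [a1 a2]; case: (tm t2) => [c1 c2];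
  case: (tm b) => [b1 b2]; rewrite /lexle /= => H1 H2 H3 H4.
all: have Eb1 : b1 = a1 by lia.
all: have Eb2 : b2 = a2 \/ b2 = c2 by lia.
all: by case: Eb2 => ->; [left|right]; rewrite Eb1 ?H3.
Qed.

Ltac pvd := match goal with H : path_vertex _ _ _ = _ |- _ =>
  case/pv_inv: H => [[_ ?]|[[_ [_ ?]]|[_ [_ ?]]]]; discriminate end.

Lemma mem_Tri k i q r : Tri i q r \in bag k ->
  (k = KT i q /\ r < 3) \/ (r = 1 /\ k = KQ i q) \/ (r = 0 /\ k = KQ i q.-1 /\ 0 < q).
Proof.
case: k => [j|i' q'|i' q'] /= /memI /= [E|[E|[E|[E|[E|[]]]]]]; try discriminate; try by pvd.
all: case: E => <- <- <-.
all: first [by left | by right; left | by right; right; repeat split].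
Qed.

Ltac tric := case=> [[-> _]|[[? ->]|[? [-> ?]]]];
  first [by left | by right | done | exfalso; lia].

Lemma conv_Tri i q r : convex_at (Tri i q r).
Proof.
case V: (validk (KT i q)); last first.
{ apply: (@conv_single _ (KK 0)) => k Vk /mem_Tri H.
  suff : validk (KT i q) by rewrite V.
  case: H => [[E _]|[[_ E]|[_ [E Hq]]]]; subst k; move: Vk => //=.
  { by case/andP=> -> /ltnW. }
  by case/andP=> ->; rewrite prednK. }
case/andP: (V) => Hi Hq.
case: r => [|[|[|r]]].
{ case: q Hq V => [|q'] Hq V.
  { apply: (@conv_single _ (KT i 0)) => k Vk /mem_Tri; tric. }
  apply: (@conv_two _ (KQ i q') (KT i q'.+1)) => //.
  all: first [ by rewrite !inE eqxx ?orbT | by rewrite /=; lia | idtac ].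
  move=> k Vk /mem_Tri; tric. }
{ case Hq1 : (q.+1 < w i).
  { apply: (@conv_two _ (KT i q) (KQ i q)) => //.
    all: first [ by rewrite !inE eqxx ?orbT | by rewrite /=; lia | idtac ].
    move=> k Vk /mem_Tri; tric. }
  apply: (@conv_single _ (KT i q)) => k Vk /mem_Tri [[-> _]|[[_ E]|[? _]]] //.
  by subst k; move: Vk; rewrite /= Hq1 andbF. }
{ apply: (@conv_single _ (KT i q)) => k Vk /mem_Tri; tric. }
apply: (@conv_single _ (KT i q)) => k Vk /mem_Tri; tric.
Qed.

Lemma inKT4 i q : path_vertex B (f i) (off i + q) \in bag (KT i q).
Proof. by rewrite !inE eqxx ?orbT. Qed.
Lemma inKT5 i q : path_vertex B (f i) (off i + q).+1 \in bag (KT i q).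
Proof. by rewrite !inE eqxx ?orbT. Qed.
Lemma inKQ5 i q : path_vertex B (f i) (off i + q).+1 \in bag (KQ i q).
Proof. by rewrite !inE eqxx ?orbT. Qed.

Lemma conv_K4 i q r : convex_at (K4x i q r).
Proof.
apply: (@conv_single _ (KQ i q)) => k Vk.
case: k Vk => [j|i' q'|i' q'] /= Vk /memI /= [E|[E|[E|[E|[E|[]]]]]]; try discriminate; try by pvd.
all: by case: E => -> ->.
Qed.

Lemma mem_Cl5 k j r : validk k -> Cl5 j r \in bag k ->
  (k = KK j /\ r < 5) \/
  (exists i q, [/\ k = KT i q, f i = j, off i + q = 0 & r = 1]) \/
  (exists i q, [/\ k = KT i q, (f i).+1 = j, (off i + q).+1 = B & r = 0]).
Proof.
case: k => [j'|i q|i q] Vk /memI /= [E|[E|[E|[E|[E|[]]]]]]; try discriminate.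
all: try by case: E => <- <-; left.
all: have [Hi Hq Hfi Hc] : [/\ _, _, _ & _] := valid_KT Vk.
all: case/pv_inv: E => [[Hp E]|[[Hp [HB E]]|[_ [_ E]]]]; try discriminate; try lia.
all: case: E => E1 E2; subst j r.
all: first [ by right; left; exists i, q | by right; right; exists i, q ].
Qed.

Lemma Cl5_KT i q : validk (KT i q) -> (off i + q = 0 -> Cl5 (f i) 1 \in bag (KT i q)) /\
  ((off i + q).+1 = B -> Cl5 (f i).+1 0 \in bag (KT i q)).
Proof.
move=> Vk; split=> E.
- by have := inKT4 i q; rewrite E /path_vertex eqxx.
- have [_ _ _ Hc] := valid_KT Vk.
  have HB : (B == 0) = false by apply/negbTE; rewrite -lt0n; lia.
  by have := inKT5 i q; rewrite E /path_vertex HB eqxx.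
Qed.

Lemma conv_Cl5 j r : convex_at (Cl5 j r).
Proof.
case: r => [|[|r]].
{ case: j => [|j'].
  { apply: (@conv_single _ (KK 0)) => k Vk /(mem_Cl5 Vk).
    by case=> [[-> _]|[[i [q [_ _ _ ?]]]|[i [q [_ ? _ _]]]]]. }
  case: (B =P 0) => HB.
  { apply: (@conv_single _ (KK j'.+1)) => k Vk /(mem_Cl5 Vk).
    case=> [[-> _]|[[i [q [_ _ _ ?]]]|[i [q [_ _ ? _]]]]] //; exfalso; lia. }
  apply: (@conv_iff _ (j', (2 * B).-1) (j'.+1, 0)) => k Vk; split.
  { move/(mem_Cl5 Vk) => [[-> _]|[[i [q [-> Hfi Hc ?]]]|[i [q [-> Hfi Hc _]]]]];
      rewrite /lexle /=; lia. }
  case: k Vk => [j''|i q|i q] Vk; rewrite /lexle /= => H.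
  { have -> : j'' = j'.+1 by lia.
    by rewrite !inE eqxx ?orbT. }
  { have [Hi Hq Hfi Hc] := valid_KT Vk.
    have -> : j'.+1 = (f i).+1 by lia.
    apply: (Cl5_KT Vk).2; lia. }
  have [Hi Hq Hfi Hc] := valid_KQ Vk; exfalso; lia. }
{ apply: (@conv_iff _ (j, 0) (j, 1)) => k Vk; split.
  { move/(mem_Cl5 Vk) => [[-> _]|[[i [q [-> Hfi Hc ?]]]|[i [q [-> Hfi Hc ?]]]]];
      rewrite /lexle /=; lia. }
  case: k Vk => [j''|i q|i q] Vk; rewrite /lexle /= => H.
  { have -> : j'' = j by lia.
    by rewrite !inE eqxx ?orbT. }
  { have [Hi Hq Hfi Hc] := valid_KT Vk.
    have -> : j = f i by lia.
    apply: (Cl5_KT Vk).1; lia. }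
  have [Hi Hq Hfi Hc] := valid_KQ Vk; exfalso; lia. }
apply: (@conv_single _ (KK j)) => k Vk /(mem_Cl5 Vk).
by case=> [[-> _]|[[i [q [_ _ _ ?]]]|[i [q [_ _ _ ?]]]]].
Qed.

Lemma pvP j p : 0 < p < B -> path_vertex B j p = Pth j p.
Proof.
move=> H; rewrite /path_vertex.
have -> : (p == 0) = false by apply/negbTE; rewrite -lt0n; lia.
by have -> : (p == B) = false by apply/negbTE/eqP; lia.
Qed.

Lemma mem_Pth k j p : validk k -> Pth j p \in bag k -> 0 < p < B /\
  ((exists i q, [/\ k = KT i q, f i = j & (off i + q = p \/ (off i + q).+1 = p)]) \/
   (exists i q, [/\ k = KQ i q, f i = j & (off i + q).+1 = p])).
Proof.
case: k => [j'|i q|i q] Vk /memI /= [E|[E|[E|[E|[E|[]]]]]]; try discriminate.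
all: first [have [Hi Hq Hfi Hc] : [/\ _, _, _ & _] := valid_KT Vk
           |have [Hi Hq Hfi Hc] : [/\ _, _, _ & _] := valid_KQ Vk].
all: case/pv_inv: E => [[Hp E]|[[Hp [HB E]]|[H0 [H1 E]]]]; try discriminate; try lia.
all: case: E => E1 E2; subst j p; split; try lia.
- by left; exists i, q; split=> //; left.
- by left; exists i, q; split=> //; right.
- by right; exists i, q.
Qed.

Lemma conv_Pth j p : convex_at (Pth j p).
Proof.
move=> a b c Va Vb Vc Hab Hbc Ha.
have [Hp _] := mem_Pth Va Ha.
move: a b c Va Vb Vc Hab Hbc Ha.
apply: (@conv_iff _ (j, (2 * p).-1) (j, 2 * p + 1)) => k Vk; split.
{ move/(mem_Pth Vk) => [_ [[i [q [-> Hfi Hc]]]|[i [q [-> Hfi Hc]]]]];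
    rewrite /lexle /=; lia. }
case: k Vk => [j''|i q|i q] Vk; rewrite /lexle /= => H.
{ exfalso; lia. }
{ have [Hi Hq Hfi Hc] := valid_KT Vk.
  have Ej : j = f i by lia.
  case: (ltnP (off i + q) p) => Hcp.
  { have E : p = (off i + q).+1 by lia.
    by rewrite Ej -(pvP (f i) Hp) E inKT5. }
  have E : p = off i + q by lia.
  by rewrite Ej -(pvP (f i) Hp) E inKT4. }
have [Hi Hq Hfi Hc] := valid_KQ Vk.
have Ej : j = f i by lia.
have E : p = (off i + q).+1 by lia.
by rewrite Ej -(pvP (f i) Hp) E inKQ5.
Qed.

Lemma conv_all x : convex_at x.
Proof.
case: x => [i q r|i q r|j r|j p];
  [exact: conv_Tri|exact: conv_K4|exact: conv_Cl5|exact: conv_Pth].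
Qed.

Definition keys := [seq KK j | j <- iota 0 m.+1] ++
  flatten [seq [seq KT i q | q <- iota 0 (w i)] ++ [seq KQ i q | q <- iota 0 (w i).-1]
          | i <- iota 0 n].

Definition kle a b := lexle (tm a) (tm b).
Definition Xs := map bag (sort kle keys).

Lemma keys_valid k : k \in keys -> validk k.
Proof.
rewrite mem_cat => /orP [/mapP [j]|/flatten_mapP [i]]; rewrite ?mem_iota /=.
  by move=> Hj -> /=; lia.
move=> Hi; rewrite mem_cat => /orP [/mapP [q]|/mapP [q]]; rewrite mem_iota => Hq -> /=; lia.
Qed.

Lemma valid_keys k : validk k -> k \in keys.
Proof.
rewrite mem_cat; case: k => [j|i q|i q] V; rewrite /= in V; apply/orP.
  by left; apply: map_f; rewrite mem_iota; lia.
all: right; apply/flatten_mapP; exists i; first by rewrite mem_iota; lia.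
all: rewrite mem_cat; apply/orP.
  by left; apply: map_f; rewrite mem_iota; lia.
by right; apply: map_f; rewrite mem_iota; lia.
Qed.

Lemma kle_trans : transitive kle.
Proof. move=> b a c; rewrite /kle /lexle; case: (tm a) (tm b) (tm c) => [? ?] [? ?] [? ?] /=; lia. Qed.
Lemma kle_refl : reflexive kle.
Proof. move=> a; rewrite /kle /lexle; case: (tm a) => [? ?] /=; lia. Qed.
Lemma kle_total : total kle.
Proof. move=> a b; rewrite /kle /lexle; case: (tm a) (tm b) => [? ?] [? ?] /=; lia. Qed.

Lemma Xs_interval i j k x : i <= j -> j <= k -> k < size Xs ->
  x \in nth [::] Xs i -> x \in nth [::] Xs k -> x \in nth [::] Xs j.
Proof.
rewrite /Xs size_map => Hij Hjk Hk.
have Hj : j < size (sort kle keys) by lia.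
have Hi : i < size (sort kle keys) by lia.
rewrite !(nth_map (KK 0)) //.
have Vn : forall t, t < size (sort kle keys) -> validk (nth (KK 0) (sort kle keys) t).
  by move=> t Ht; apply: keys_valid; rewrite -(mem_sort kle); apply: mem_nth.
have So := sorted_leq_nth kle_trans kle_refl (KK 0) (sort_sorted kle_total keys).
apply: (conv_all (Vn _ Hi) (Vn _ Hj) (Vn _ Hk)).
  by apply: So; rewrite ?inE.
by apply: So; rewrite ?inE.
Qed.

Lemma Xs_width X : X \in Xs -> size (undup X) <= 5.
Proof.
case/mapP=> k _ ->; apply: leq_trans (size_undup _) _; by case: k.
Qed.

Lemma bag_in_Xs k : validk k -> bag k \in Xs.
Proof. by move=> V; apply: map_f; rewrite mem_sort; apply: valid_keys. Qed.

Lemma in_Xs X : X \in Xs -> exists2 k, validk k & X = bag k.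
Proof. by case/mapP=> k Hk ->; exists k => //; apply: keys_valid; rewrite -(mem_sort kle). Qed.

Lemma sumn_aux (s : seq nat) : (forall i, i \in s -> 0 < w i) ->
  sumn [seq w i + (w i).-1 | i <- s] + size s = 2 * sumn [seq w i | i <- s].
Proof.
elim: s => [|a s IH] //= H.
have := H a (mem_head _ _); have : forall i, i \in s -> 0 < w i by move=> i Hi; apply: H; rewrite in_cons Hi orbT.
move/IH; lia.
Qed.

Lemma size_Xs : size Xs + n = m.+1 + 2 * sumn [seq w i | i <- iota 0 n].
Proof.
rewrite /Xs size_map size_sort /keys size_cat size_map size_iota size_flatten.
rewrite /shape -map_comp.
have -> : [seq (size \o (fun i => [seq KT i q | q <- iota 0 (w i)] ++
             [seq KQ i q | q <- iota 0 (w i).-1])) i | i <- iota 0 n]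
          = [seq w i + (w i).-1 | i <- iota 0 n].
  by apply: eq_map => i /=; rewrite size_cat !size_map !size_iota.
have H : forall i, i \in iota 0 n -> 0 < w i by move=> i; rewrite mem_iota => Hi; apply: Hw; lia.
have := sumn_aux H; rewrite size_iota; lia.
Qed.

Variable S : seq nat.
Hypothesis HwS : forall i, w i = nth 0 S i.
Hypothesis Hn : n = 3 * m.
Hypothesis Hsize : size S = n.

Lemma tri_cl i q : i < n -> q < w i -> GSb_clique S m B [:: Tri i q 0; Tri i q 1; Tri i q 2].
Proof. by move=> Hi Hq; left; exists i, q; split; rewrite -?Hn -?HwS. Qed.
Lemma k4_cl i q : i < n -> q.+1 < w i ->
  GSb_clique S m B [:: Tri i q 1; Tri i q.+1 0; K4x i q 0; K4x i q 1].
Proof. by move=> Hi Hq; right; left; exists i, q; split; rewrite -?Hn -?HwS. Qed.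
Lemma k5_cl j : j <= m -> GSb_clique S m B [:: Cl5 j 0; Cl5 j 1; Cl5 j 2; Cl5 j 3; Cl5 j 4].
Proof. by move=> Hj; right; right; left; exists j. Qed.
Lemma path_cl j p : j < m -> p < B ->
  GSb_clique S m B [:: path_vertex B j p; path_vertex B j p.+1].
Proof. by move=> Hj Hp; right; right; right; exists j, p. Qed.

Lemma bag_vertex k x : validk k -> x \in bag k -> GSb_vertex S m B x.
Proof.
case: k => [j|i q|i q] V.
{ by move=> Hx; exists [:: Cl5 j 0; Cl5 j 1; Cl5 j 2; Cl5 j 3; Cl5 j 4] => //; apply: k5_cl. }
{ have [Hi Hq Hfi Hc] := valid_KT V.
  move/memI => /= [E|[E|[E|[E|[E|[]]]]]]; subst x.
  all: first [ exists [:: Tri i q 0; Tri i q 1; Tri i q 2];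
                 [by apply: tri_cl | by rewrite !inE eqxx ?orbT]
             | exists [:: path_vertex B (f i) (off i + q); path_vertex B (f i) (off i + q).+1];
                 [by apply: path_cl | by rewrite !inE eqxx ?orbT] ]. }
have [Hi Hq Hfi Hc] := valid_KQ V.
move/memI => /= [E|[E|[E|[E|[E|[]]]]]]; subst x.
all: first [ exists [:: Tri i q 1; Tri i q.+1 0; K4x i q 0; K4x i q 1];
               [by apply: k4_cl | by rewrite !inE eqxx ?orbT]
           | exists [:: path_vertex B (f i) (off i + q).+1; path_vertex B (f i) (off i + q).+2];
               [by apply: path_cl => //; lia | by rewrite !inE eqxx ?orbT] ].
Qed.

Lemma cover_clique C : GSb_clique S m B C -> exists2 k, validk k & {subset C <= bag k}.
Proof.
case=> [[i [q [Hi Hq ->]]]|[[i [q [Hi Hq ->]]]|[[j [Hj ->]]|[j [p [Hj Hp ->]]]]]].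
{ exists (KT i q); first by rewrite /= HwS Hn Hi Hq.
  by move=> x /memI /= H; apply/memI => /=; tauto. }
{ exists (KQ i q); first by rewrite /= HwS Hn Hi Hq.
  by move=> x /memI /= H; apply/memI => /=; tauto. }
{ exists (KK j) => //. }
have [i [q [Hi Hfi Hq Hc]]] := exists_tri Hj Hp.
  exists (KT i q); first by rewrite /= Hi Hq.
  by move=> x /memI /= H; apply/memI; rewrite /= Hfi Hc; tauto.
Qed.

Lemma main_pd : [/\ is_path_decomposition (GSb_vertex S m B) (GSb_edge S m B) Xs,
  pd_width_le Xs 4 & size Xs + n = m.+1 + 2 * sumn S].
Proof.
split.
{ split; [|split; [|split]].
  { move=> X x /in_Xs [k V ->]; exact: bag_vertex. }
  { move=> x [C /cover_clique [k V Hs'] Hx].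
    by exists (bag k); [apply: bag_in_Xs | apply: Hs']. }
  { move=> x y [_ [C /cover_clique [k V Hs'] /andP [Hx Hy]]].
    by exists (bag k); [apply: bag_in_Xs | rewrite !Hs']. }
  move=> i j k x; exact: Xs_interval. }
{ move=> X /Xs_width; done. }
rewrite size_Xs (eq_map HwS) -Hsize.
  by have := mkseq_nth 0 S; rewrite /mkseq => ->.
Qed.
End Construction.

Local Open Scope ring_scope.

Theorem mainTheorem9 (m : nat) (S : seq nat) (b : int) :
  size S = (3 * m)%N ->
  (forall i, (i < 3 * m)%N -> (0 < nth 0 S i)%N) ->
  (exists P : 'I_(3 * m) -> 'I_m,
     forall j : 'I_m, ((\sum_(i < 3 * m | P i == j) nth 0 S i)%N)%:Z = b) ->
  exists Xs : seq (seq vert),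
    [/\ is_path_decomposition (GSb_vertex S m `|b|%N) (GSb_edge S m `|b|%N) Xs,
        pd_width_le Xs 4 &
        (pd_length Xs)%:Z <= 1 - 2 * m%:Z + 2 * (sumn S)%:Z].
Proof.
move=> Hsize Hpos [P HP].
pose f (i : nat) : nat := if @insub nat (fun x => (x < 3 * m)%N) 'I_(3 * m) i is Some o
                          then val (P o) else 0%N.
have Hfv : forall o : 'I_(3 * m), f (val o) = val (P o) by move=> o; rewrite /f valK.
have Hf : forall i, (i < 3 * m)%N -> (f i < m)%N.
  by move=> i Hi; have := Hfv (Ordinal Hi) => /= ->.
have Hs : forall j, (j < m)%N ->
    (\sum_(0 <= i < 3 * m | f i == j) nth 0 S i)%N = `|b|%N.
  move=> j Hj; rewrite -(HP (Ordinal Hj)) /= big_mkord.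
  by apply: eq_bigl => i; rewrite Hfv.
have [H1 H2 H3] := main_pd Hpos Hf Hs (fun i => erefl) (erefl _) Hsize.
eexists; split; [exact: H1 | exact: H2 |].
rewrite /pd_length; move: H3; move: (size (Xs _ _ _ _ _)) => k; lia.
Qed.
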